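(* Let $R$ be a ring and $n\in\{0,1,2,\dots\}\cup\{\infty\}$. (1) The following are equivalent: (a) $l.\mathrm{fPD}(R)\leq n$; (b) every $(n+1)$-projective left $R$-module is $n$-projective; (c) for some $m>n$, every $m$-projective left $R$-module is $n$-projective; (d) for every $m>n$, every $m$-projective left $R$-module is $n$-projective; (e) every $\infty$-projective left $R$-module is $n$-projective. (2) The following are equivalent: (a) $R$ is left coherent and every finitely presented left $R$-module has projective dimension $<n+1$; (b) every pure projective left $R$-module is $n$-projective.
   Context: $R$ is an associative ring with identity; modules are left $R$-modules; $\infty+1=\infty$. For a positive integer $k$, $\mathcal{P}^{<k}$ is the class of modules $M$ admitting an exact sequence $0\to P_j\to\cdots\to P_0\to M\to 0$ with $j\le k-1$ and every $P_i$ finitely generated projective; $\mathcal{P}^{<\infty}$ is the class of modules admitting such a sequence for some finite $j$. $l.\mathrm{fPD}(R)$ is the supremum of projective dimensions of modules in $\mathcal{P}^{<\infty}$. A short exact sequence $0\to A\to B\to C\to 0$ is $n$-exact if $0\to\mathrm{Hom}_R(M,A)\to\mathrm{Hom}_R(M,B)\to\mathrm{Hom}_R(M,C)\to0$ is exact for all $M\in\mathcal{P}^{<n+1}$. A module $P$ is $n$-projective if $\mathrm{Hom}_R(P,-)$ preserves exactness of every $n$-exact sequence. A module is pure projective if $\mathrm{Hom}_R(P,-)$ preserves exactness of every pure exact sequence (equivalently, it is a direct summand of a direct sum of finitely presented modules). *)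

(* Defs.v *)
(* left R-modules are lmodType R over an arbitrary
   (possibly non-commutative) ring R : pzRingType. *)
From HB Require Import structures.
From mathcomp Require Import all_boot all_order all_algebra.
Set Implicit Arguments. Unset Strict Implicit. Unset Printing Implicit Defensive.
Import GRing.Theory.
Local Open Scope ring_scope.

(* Extended naturals {0,1,2,...} ∪ {∞}: Some k = k, None = ∞. *)
Definition natinf := option nat.
Definition succinf (n : natinf) : natinf := option_map S n.
(* "m > n" on extended naturals, read as m >= n+1 with ∞+1 = ∞. *)
Definition gt_inf (m n : natinf) : Prop :=
  match n, m with
  | None, None => True
  | None, Some _ => False
  | Some _, None => True
  | Some a, Some b => (a < b)%N
  end.

Definition surjective {A B : Type} (f : A -> B) : Prop :=
  forall y, exists x, f x = y.

Section Modules.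
Variable R : pzRingType.

Definition exact_at (U V W : lmodType R) (f : U -> V) (g : V -> W) : Prop :=
  (forall x, g (f x) = 0) /\ (forall y, g y = 0 -> exists x, f x = y).

Definition short_exact (A B C : lmodType R) (f : {linear A -> B})
  (g : {linear B -> C}) : Prop :=
  injective f /\ exact_at f g /\ surjective g.

Definition hom_exact (M A B C : lmodType R) (f : {linear A -> B})
  (g : {linear B -> C}) : Prop :=
  (forall h1 h2 : {linear M -> A}, (forall x, f (h1 x) = f (h2 x)) ->
       forall x, h1 x = h2 x)
  /\ (forall h : {linear M -> B}, (forall x, g (h x) = 0) ->
       exists k : {linear M -> A}, forall x, f (k x) = h x)
  /\ (forall h : {linear M -> C},
       exists k : {linear M -> B}, forall x, g (k x) = h x).

Definition projective (P : lmodType R) : Prop :=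
  forall (B C : lmodType R) (g : {linear B -> C}), surjective g ->
  forall h : {linear P -> C}, exists k : {linear P -> B}, forall x, g (k x) = h x.

Definition fin_gen (M : lmodType R) : Prop :=
  exists s : seq M, forall x : M, exists r : 'I_(size s) -> R,
    x = \sum_(i < size s) r i *: s`_i.

Definition fg_projective (M : lmodType R) : Prop := projective M /\ fin_gen M.

Definition fin_pres (M : lmodType R) : Prop :=
  exists s : seq M,
    (forall x : M, exists r : 'I_(size s) -> R,
        x = \sum_(i < size s) r i *: s`_i) /\
    exists rels : seq ('I_(size s) -> R),
      (forall k : 'I_(size rels),
         \sum_(i < size s) (nth (fun _ => 0) rels k) i *: s`_i = 0) /\
      (forall r : 'I_(size s) -> R, \sum_(i < size s) r i *: s`_i = 0 ->
         exists c : 'I_(size rels) -> R,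
           forall i, r i = \sum_(k < size rels) c k * (nth (fun _ => 0) rels k) i).

Definition resolution (Q : lmodType R -> Prop) (j : nat) (M : lmodType R) : Prop :=
  exists (P : nat -> lmodType R) (d : forall i, {linear P i.+1 -> P i})
         (e : {linear P 0%N -> M}),
    (forall i, (i <= j)%N -> Q (P i)) /\
    surjective e /\
    (if j is j'.+1 then
       exact_at (d 0%N) e /\
       (forall i, (i.+1 < j)%N -> exact_at (d i.+1) (d i)) /\
       injective (d j')
     else injective e).

Definition pd_le (M : lmodType R) (k : nat) : Prop :=
  exists j, (j <= k)%N /\ resolution projective j M.

Definition pd_le_inf (M : lmodType R) (n : natinf) : Prop :=
  if n is Some k then pd_le M k else True.

(* pd M < n+1, n extended (with ∞+1 = ∞, i.e. pd M finite when n = ∞) *)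
Definition pd_lt_succ (M : lmodType R) (n : natinf) : Prop :=
  if n is Some k then pd_le M k else exists k, pd_le M k.

(* M ∈ P^{<n+1}: resolution by f.g. projectives of length j <= n
   (for n = ∞: any finite length, i.e. P^{<∞}) *)
Definition P_lt_succ (n : natinf) (M : lmodType R) : Prop :=
  exists j, (if n is Some k then (j <= k)%N else True) /\
            resolution fg_projective j M.

Definition P_lt_inf (M : lmodType R) : Prop :=
  exists j, resolution fg_projective j M.

Definition lfPD_le (n : natinf) : Prop :=
  forall M : lmodType R, P_lt_inf M -> pd_le_inf M n.

Definition n_exact (n : natinf) (A B C : lmodType R) (f : {linear A -> B})
  (g : {linear B -> C}) : Prop :=
  short_exact f g /\ forall M : lmodType R, P_lt_succ n M -> hom_exact M f g.

Definition n_projective (n : natinf) (P : lmodType R) : Prop :=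
  forall (A B C : lmodType R) (f : {linear A -> B}) (g : {linear B -> C}),
    n_exact n f g -> hom_exact P f g.

Definition pure_exact (A B C : lmodType R) (f : {linear A -> B})
  (g : {linear B -> C}) : Prop :=
  short_exact f g /\ forall F : lmodType R, fin_pres F -> hom_exact F f g.

Definition pure_projective (P : lmodType R) : Prop :=
  forall (A B C : lmodType R) (f : {linear A -> B}) (g : {linear B -> C}),
    pure_exact f g -> hom_exact P f g.

(* left coherent: every finitely generated left ideal is finitely presented;
   left ideals = modules embedding into the regular module R^o *)
Definition left_coherent : Prop :=
  forall (I : lmodType R) (iota : {linear I -> R^o}),
    injective iota -> fin_gen I -> fin_pres I.

End Modules.

(* Main.v *)
Require Import Defs.
From HB Require Import structures.
From mathcomp Require Import all_boot all_order all_algebra.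
From mathcomp Require Import boolp.
Set Implicit Arguments. Unset Strict Implicit. Unset Printing Implicit Defensive.
Import GRing.Theory.
Local Open Scope ring_scope.

Section Basics.
Variable R : pzRingType.
Local Notation lmod := (lmodType R).

Definition mkLin (U V : lmod) (f : U -> V)
  (H : forall a x y, f (a *: x + y) = a *: f x + f y) : {linear U -> V} :=
  HB.pack f (GRing.isLinear.Build R U V *:%R f H).

Lemma id_lin (U : lmod) a (x y : U) : id (a *: x + y) = a *: id x + id y.
Proof. by []. Qed.
Definition idL (U : lmod) : {linear U -> U} := mkLin (@id_lin U).

Lemma comp_lin (U V W : lmod) (g : {linear V -> W}) (f : {linear U -> V}) a x y :
  g (f (a *: x + y)) = a *: g (f x) + g (f y).
Proof. by rewrite !linearP. Qed.
Definition compL (U V W : lmod) (g : {linear V -> W}) (f : {linear U -> V}) :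
  {linear U -> W} := mkLin (comp_lin g f).
Lemma compLE (U V W : lmod) (g : {linear V -> W}) (f : {linear U -> V}) x :
  compL g f x = g (f x).
Proof. by []. Qed.

Lemma zero_lin (U V : lmod) a (x y : U) : (fun _ => 0 : V) (a *: x + y) = a *: (fun _ => 0 : V) x + (fun _ => 0 : V) y.
Proof. by rewrite scaler0 addr0. Qed.
Definition zeroL (U V : lmod) : {linear U -> V} := mkLin (@zero_lin U V).

Lemma pair_lin (U V W : lmod) (f : {linear U -> V}) (g : {linear U -> W}) a x y :
  (fun u => (f u, g u) : (V * W)%type) (a *: x + y) =
  a *: (fun u => (f u, g u) : (V * W)%type) x + (fun u => (f u, g u) : (V * W)%type) y.
Proof. by rewrite /= !linearP. Qed.
Definition pairL (U V W : lmod) (f : {linear U -> V}) (g : {linear U -> W}) :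
  {linear U -> (V * W)%type} := mkLin (pair_lin f g).
Lemma fst_lin (V W : lmod) a (x y : (V * W)%type) : (a *: x + y).1 = a *: x.1 + y.1.
Proof. by []. Qed.
Definition fstL (V W : lmod) : {linear (V * W)%type -> V} := mkLin (@fst_lin V W).
Lemma snd_lin (V W : lmod) a (x y : (V * W)%type) : (a *: x + y).2 = a *: x.2 + y.2.
Proof. by []. Qed.
Definition sndL (V W : lmod) : {linear (V * W)%type -> W} := mkLin (@snd_lin V W).

Lemma pairE (V W : lmod) (x y : (V * W)%type) : x = y <-> x.1 = y.1 /\ x.2 = y.2.
Proof. by case: x; case: y => ? ? ? ? /=; split=> [[-> ->]|[-> ->]]. Qed.

Definition closed (V : lmod) (P : V -> Prop) :=
  P 0 /\ forall a x y, P x -> P y -> P (a *: x + y).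
Definition cl (V : lmod) (P : V -> Prop) (x : V) :=
  forall T : V -> Prop, closed T -> (forall y, P y -> T y) -> T x.

Section Closed.
Variables (V : lmod) (P : V -> Prop).
Lemma cl_closed : closed (cl P).
Proof.
split; first by move=> T [T0 _].
move=> a x y hx hy T cT hT; case: (cT) => _ TD; exact: TD (hx T cT hT) (hy T cT hT).
Qed.
Lemma cl_incl x : P x -> cl P x.
Proof. by move=> px T _ h; exact: h. Qed.
Lemma cl_id : closed P -> forall x, cl P x <-> P x.
Proof. by move=> cP x; split=> [h|]; [exact: h|exact: cl_incl]. Qed.
Lemma closed0 Q : closed Q -> Q (0 : V).
Proof. by case. Qed.
Lemma closedD (Q : V -> Prop) : closed Q -> forall x y, Q x -> Q y -> Q (x + y).
Proof. by move=> [_ h] x y hx hy; have := h 1 x y hx hy; rewrite scale1r. Qed.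
Lemma closedZ (Q : V -> Prop) : closed Q -> forall a x, Q x -> Q (a *: x).
Proof. by move=> [h0 h] a x hx; have := h a x 0 hx h0; rewrite addr0. Qed.
Lemma closedN (Q : V -> Prop) : closed Q -> forall x, Q x -> Q (- x).
Proof. by move=> cQ x hx; rewrite -scaleN1r; exact: closedZ. Qed.
Lemma closedB (Q : V -> Prop) : closed Q -> forall x y, Q x -> Q y -> Q (x - y).
Proof. by move=> cQ x y hx hy; apply: closedD => //; exact: closedN. Qed.
End Closed.

Section Sub.
Variables (V : lmod) (P : V -> Prop).
Definition subT := {x : V | `[< cl P x >]}.
HB.instance Definition _ := Choice.on subT.
Let clP := cl_closed P.
Lemma sub_mem (x : subT) : cl P (val x).
Proof. exact: asboolW (valP x). Qed.
Definition subIn (x : V) (h : cl P x) : subT := exist _ x (asboolT h).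
Definition sub0 : subT := subIn (closed0 clP).
Definition subadd (x y : subT) : subT := subIn (closedD clP (sub_mem x) (sub_mem y)).
Definition subopp (x : subT) : subT := subIn (closedN clP (sub_mem x)).
Definition subscale a (x : subT) : subT := subIn (closedZ clP a (sub_mem x)).
Lemma subaddA : associative subadd.
Proof. by move=> x y z; apply: val_inj; rewrite /= addrA. Qed.
Lemma subaddC : commutative subadd.
Proof. by move=> x y; apply: val_inj; rewrite /= addrC. Qed.
Lemma subadd0 : left_id sub0 subadd.
Proof. by move=> x; apply: val_inj; rewrite /= add0r. Qed.
Lemma subaddN : left_inverse sub0 subopp subadd.
Proof. by move=> x; apply: val_inj; rewrite /= addNr. Qed.
HB.instance Definition _ := GRing.isZmodule.Build subT subaddA subaddC subadd0 subaddN.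
Lemma subZA a b (x : subT) : subscale a (subscale b x) = subscale (a * b) x.
Proof. by apply: val_inj; rewrite /= scalerA. Qed.
Lemma subZ1 : left_id 1 subscale.
Proof. by move=> x; apply: val_inj; rewrite /= scale1r. Qed.
Lemma subZDr : right_distributive subscale +%R.
Proof. by move=> a x y; apply: val_inj; rewrite /= scalerDr. Qed.
Lemma subZDl v : {morph subscale^~ v : a b / a + b}.
Proof. by move=> a b; apply: val_inj; rewrite /= scalerDl. Qed.
HB.instance Definition _ := GRing.Zmodule_isLmodule.Build R subT subZA subZ1 subZDr subZDl.
Lemma val_lin a (x y : subT) : val (a *: x + y) = a *: val x + val y.
Proof. by []. Qed.
Definition valL : {linear subT -> V} := mkLin val_lin.
Lemma valL_inj : injective valL.
Proof. exact: val_inj. Qed.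
Lemma subE (x y : subT) : val x = val y -> x = y.
Proof. exact: val_inj. Qed.
Lemma val0 : val (0 : subT) = 0. Proof. by []. Qed.

Variables (U : lmod) (f : {linear U -> V}) (hf : forall x, P (f x)).
Definition coF (x : U) : subT := subIn (cl_incl (hf x)).
Lemma co_lin a x y : coF (a *: x + y) = a *: coF x + coF y.
Proof. by apply: val_inj; rewrite /= linearP. Qed.
Definition coL : {linear U -> subT} := mkLin co_lin.
Lemma coLE x : val (coL x) = f x. Proof. by []. Qed.
End Sub.

Section Ker.
Variables (U V : lmod) (g : {linear U -> V}).
Definition kerP (x : U) := g x = 0.
Lemma kerP_closed : closed kerP.
Proof. by split; rewrite /kerP ?linear0 // => a x y hx hy; rewrite linearP hx hy scaler0 addr0. Qed.
Definition ker := subT kerP.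
Lemma ker_mem (x : ker) : g (val x) = 0.
Proof. exact: (proj1 (cl_id kerP_closed _) (sub_mem x)). Qed.
Definition kerIn (x : U) (h : g x = 0) : ker := subIn (cl_incl h).
Lemma kerL_ses : surjective g -> short_exact (valL kerP) g.
Proof.
move=> sg; split; first exact: valL_inj.
split=> //; split; first by move=> x; exact: ker_mem.
by move=> y hy; exists (kerIn hy).
Qed.
End Ker.

End Basics.

Lemma shuf (V : zmodType) (a b c d e f : V) :
  a + b + (c + d) - (e + f) = (a + c - e) + (b + d - f).
Proof. by rewrite opprD (addrACA a b c d) [RHS]addrACA. Qed.

Section Homo.
Variable R : pzRingType.
Local Notation lmod := (lmodType R).

Definition isoM (U V : lmod) := exists (f : {linear U -> V}) (g : {linear V -> U}),
  cancel f g /\ cancel g f.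
Definition retr (F X : lmod) := exists (i : {linear F -> X}) (p : {linear X -> F}),
  cancel i p.

Lemma iso_sym U V : isoM U V -> isoM V U.
Proof. by case=> f [g [h1 h2]]; exists g, f. Qed.
Lemma iso_retr U V : isoM U V -> retr U V.
Proof. by case=> f [g [h1 h2]]; exists f, g. Qed.
Lemma iso_trans U V W : isoM U V -> isoM V W -> isoM U W.
Proof.
case=> f [g [h1 h2]] [f' [g' [h1' h2']]].
exists (compL f' f), (compL g g'); split=> x; rewrite !compLE.
  by rewrite h1' h1. by rewrite h2 h2'.
Qed.
Lemma iso_refl U : isoM U U.
Proof. by exists (idL U), (idL U). Qed.
Lemma retr_trans U V W : retr U V -> retr V W -> retr U W.
Proof.
case=> f [g h1] [f' [g' h1']].
by exists (compL f' f), (compL g g') => x; rewrite !compLE h1' h1.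
Qed.

Lemma bij_lin (U V : lmod) (f : {linear U -> V}) (g : V -> U) :
  cancel f g -> cancel g f -> forall a x y, g (a *: x + y) = a *: g x + g y.
Proof.
move=> h1 h2 a x y; apply: (can_inj h1); by rewrite linearP !h2.
Qed.
Lemma bij_iso (U V : lmod) (f : {linear U -> V}) (g : V -> U) :
  cancel f g -> cancel g f -> isoM U V.
Proof. by move=> h1 h2; exists f, (mkLin (bij_lin h1 h2)). Qed.

Lemma iso_prod (U V U' V' : lmod) : isoM U U' -> isoM V V' ->
  isoM (U * V)%type (U' * V')%type.
Proof.
case=> f [g [h1 h2]] [f' [g' [h1' h2']]].
exists (pairL (compL f (fstL _ _)) (compL f' (sndL _ _))).
exists (pairL (compL g (fstL _ _)) (compL g' (sndL _ _))).
by split=> -[x y] /=; rewrite /= ?h1 ?h1' ?h2 ?h2'.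
Qed.

Section SesKer.
Variables (K P M : lmod) (f : {linear K -> P}) (g : {linear P -> M}).
Hypothesis H : short_exact f g.
Lemma ses_fK x : kerP g (f x).
Proof. by case: H => _ [[h _] _]; exact: h. Qed.
Lemma ses_ex (y : ker g) : exists k, f k == val y.
Proof. by case: H => _ [[_ h] _]; case: (h _ (ker_mem y)) => k hk; exists k; apply/eqP. Qed.
Definition sinv (y : ker g) : K := xchoose (ses_ex y).
Lemma sinvP y : f (sinv y) = val y.
Proof. exact/eqP/(xchooseP (ses_ex y)). Qed.
Lemma ses_iso_ker : isoM K (ker g).
Proof.
apply: (@bij_iso _ _ (coL ses_fK) sinv).
  by move=> x; case: H => fi _; apply: fi; rewrite sinvP.
by move=> y; apply: val_inj; rewrite coLE sinvP.
Qed.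
End SesKer.

Fixpoint Res (B C : lmod -> Prop) (m : nat) (M : lmod) {struct m} : Prop :=
  match m with
  | 0 => B M
  | m'.+1 => exists (P K : lmod) (f : {linear K -> P}) (g : {linear P -> M}),
      C P /\ short_exact f g /\ Res B C m' K
  end.

Section Gen.
Variables B C : lmod -> Prop.
Hypothesis Bret : forall F X, retr F X -> B X -> B F.
Hypothesis BprodC : forall M Q, B M -> C Q -> B (M * Q)%type.
Hypothesis Cproj : forall P, C P -> projective P.
Hypothesis Cprod : forall P Q, C P -> C Q -> C (P * Q)%type.

Lemma Res_prodC m : forall M Q, Res B C m M -> C Q -> Res B C m (M * Q)%type.
Proof.
case: m => [|m] M Q /=; first exact: BprodC.
move=> [P [K [f [g [CP [[fi [[fK fE] gs]] RK]]]]]] CQ.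
exists (P * Q)%type, K, (pairL f (zeroL K Q)), (pairL (compL g (fstL _ _)) (sndL _ _)).
split; first exact: Cprod.
split=> //; split.
  by move=> x y /pairE [/= /fi].
split; first split.
  by move=> x; apply/pairE; split=> //=; rewrite compLE fK.
  move=> [y q] /pairE [h1 h2]; simpl in h1, h2.
  by case: (fE _ h1) => k hk; exists k; apply/pairE; split=> //=.
move=> [y q]; case: (gs y) => x hx; exists (x, q); apply/pairE; split=> //=.
Qed.

Lemma Res_retr m : forall F X, retr F X -> Res B C m X -> Res B C m F.
Proof.
elim: m => [|m IH] F X; first exact: Bret.
move=> [i [p ip]] [Q [L [f [g [CQ [ses RL]]]]]].
have RK : Res B C m (ker g).
  apply: (IH _ _ _ RL); apply: iso_retr; apply: iso_sym; exact: (ses_iso_ker ses).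
have gs : surjective g by case: ses => _ [].
pose q := compL p g.
have qs : surjective q.
  by move=> y; case: (gs (i y)) => x hx; exists x; rewrite compLE hx ip.
have [et het] := Cproj CQ gs (compL i q).
have h1 : forall x : ker q, kerP g (et (val x)).
  by move=> x; rewrite /kerP het compLE (ker_mem x) linear0.
pose hf := fun z : (ker g * Q)%type => val z.1 + z.2 - et z.2.
have hl : forall a x y, hf (a *: x + y) = a *: hf x + hf y.
  move=> a x y; rewrite /hf (_ : val (a *: x + y).1 = a *: val x.1 + val y.1) //.
  by rewrite (_ : (a *: x + y).2 = a *: x.2 + y.2) // linearP shuf scalerBr scalerDr.
pose hL := mkLin hl.
have h2 : forall z, kerP q (hL z).
  move=> z; rewrite /kerP compLE /= /hf (linearB g) (linearD g) (ker_mem z.1) add0r het.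
  by rewrite !compLE linearB ip subrr.
have RKQ : Res B C m (ker g * Q)%type by exact: Res_prodC.
exists Q, (ker q), (valL _), q; split=> //; split; first exact: kerL_ses.
apply: IH RKQ.
exists (pairL (coL (P := kerP g) (f := compL et (valL _)) h1) (valL _)),
  (coL (P := kerP q) (f := hL) h2) => x; apply: val_inj.
by rewrite coLE /= /hf /= addrC addKr.
Qed.

Lemma Res_iso m M M' : isoM M M' -> Res B C m M -> Res B C m M'.
Proof. by move=> h; apply: Res_retr; apply: iso_retr; exact: iso_sym. Qed.

Lemma Res_syz m (M P K : lmod) (f : {linear K -> P}) (g : {linear P -> M}) :
  Res B C m.+1 M -> C P -> short_exact f g -> Res B C m K.
Proof.
move=> [P' [K' [f' [g' [CP' [ses' RK']]]]]] CP ses.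
have gs : surjective g by case: ses => _ [].
have gs' : surjective g' by case: ses' => _ [].
have [phi hphi] := Cproj CP gs' g.
have [psi hpsi] := Cproj CP' gs g'.
apply: (Res_iso (iso_sym (ses_iso_ker ses))).
have RK2 : Res B C m (ker g' * P)%type.
  by apply: Res_prodC => //; apply: (Res_iso (ses_iso_ker ses') RK').
apply: (Res_retr _ RK2).
have h1 : forall x : ker g, kerP g' (phi (val x)).
  by move=> x; rewrite /kerP hphi (ker_mem x).
pose hf := fun z : (ker g' * P)%type => psi (val z.1) + z.2 - psi (phi z.2).
have hl : forall a x y, hf (a *: x + y) = a *: hf x + hf y.
  move=> a x y; rewrite /hf (_ : val (a *: x + y).1 = a *: val x.1 + val y.1) //.
  by rewrite (_ : (a *: x + y).2 = a *: x.2 + y.2) // (linearP psi) (linearP phi) (linearP psi) shuf scalerBr scalerDr.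
pose hL := mkLin hl.
have h2 : forall z, kerP g (hL z).
  move=> z; rewrite /kerP /= /hf (linearB g) (linearD g) hpsi (ker_mem z.1) add0r hpsi hphi.
  by rewrite addrN.
exists (pairL (coL (P := kerP g') (f := compL phi (valL _)) h1) (valL _)),
  (coL (P := kerP g) (f := hL) h2) => x; apply: val_inj.
by rewrite coLE /= /hf /= addrC addKr.
Qed.

End Gen.

Lemma Res_mono (B C B' C' : lmod -> Prop) :
  (forall M, B M -> B' M) -> (forall M, C M -> C' M) ->
  forall m M, Res B C m M -> Res B' C' m M.
Proof.
move=> hB hC; elim=> [|m IH] M /=; first exact: hB.
by move=> [P [K [f [g [CP [ses RK]]]]]]; exists P, K, f, g; split; [exact: hC|split=> //; exact: IH].
Qed.

End Homo.

Section Classes.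
Variable R : pzRingType.
Local Notation lmod := (lmodType R).
Local Notation Fr n := ('rV[R]_n : lmod).

Section GenL.
Variables (M : lmod) (n : nat) (s : 'I_n -> M).
Definition genF (r : 'rV[R]_n) : M := \sum_(j < n) r 0 j *: s j.
Lemma genF_lin a x y : genF (a *: x + y) = a *: genF x + genF y.
Proof.
rewrite /genF scaler_sumr -big_split /=; apply: eq_bigr => j _.
by rewrite !mxE scalerDl scalerA.
Qed.
Definition genL : {linear Fr n -> M} := mkLin genF_lin.
Lemma genLE r : genL r = \sum_(j < n) r 0 j *: s j. Proof. by []. Qed.
Lemma genL_e j : genL 'e_j = s j.
Proof.
rewrite genLE (bigD1 j) //= big1 ?addr0; first by rewrite mxE !eqxx scale1r.
by move=> k kj; rewrite mxE eqxx /= (negbTE kj) scale0r.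
Qed.
End GenL.

Lemma lin_row_sum (M : lmod) n (f : {linear Fr n -> M}) r :
  f r = \sum_(j < n) r 0 j *: f 'e_j.
Proof. by rewrite {1}(row_sum_delta r) linear_sum; apply: eq_bigr => j _; rewrite linearZ. Qed.

Definition fgen (M : lmod) := exists n (f : {linear Fr n -> M}), surjective f.

Lemma big_cast_ord (V : zmodType) m n (e : m = n) (F : 'I_n -> V) :
  \sum_(i < m) F (cast_ord e i) = \sum_(i < n) F i.
Proof. by case: n / e F => F; apply: eq_bigr => i _; rewrite cast_ord_id. Qed.

Lemma fin_genP (M : lmod) : fin_gen M <-> fgen M.
Proof.
split.
  move=> [s hs]; exists (size s), (genL (fun i : 'I_(size s) => s`_i)) => x.
  case: (hs x) => r ->; exists (\row_i r i); rewrite genLE.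
  by apply: eq_bigr => i _; rewrite mxE.
move=> [n [f fs]].
pose s := [seq f 'e_j | j <- enum 'I_n].
have es : size s = n by rewrite size_map size_enum_ord.
exists s => x; case: (fs x) => r <-.
exists (fun i => r 0 (cast_ord es i)).
rewrite lin_row_sum -(big_cast_ord es); apply: eq_bigr => i _; congr (_ *: _).
rewrite (nth_map (cast_ord es i)) ?size_enum_ord -?es //.
by rewrite (_ : (i : nat) = cast_ord es i) // nth_ord_enum.
Qed.

Lemma fgen_img (M N : lmod) (h : {linear M -> N}) : surjective h -> fgen M -> fgen N.
Proof.
move=> hs [n [f fs]]; exists n, (compL h f) => y.
case: (hs y) => x <-; case: (fs x) => r <-; by exists r.
Qed.

Lemma fgen_retr (F X : lmod) : retr F X -> fgen X -> fgen F.
Proof. by move=> [i [p ip]]; apply: (fgen_img (h := p)) => y; exists (i y). Qed.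

Lemma lsub_lin m n a (x y : 'rV[R]_(m + n)) :
  lsubmx (a *: x + y) = a *: lsubmx x + lsubmx y.
Proof. by apply/matrixP => i j; rewrite !mxE. Qed.
Lemma rsub_lin m n a (x y : 'rV[R]_(m + n)) :
  rsubmx (a *: x + y) = a *: rsubmx x + rsubmx y.
Proof. by apply/matrixP => i j; rewrite !mxE. Qed.

Lemma fgen_prod (M N : lmod) : fgen M -> fgen N -> fgen (M * N)%type.
Proof.
move=> [m [f fs]] [n [g gs]].
pose l := mkLin (@lsub_lin m n); pose r := mkLin (@rsub_lin m n).
exists (m + n)%N, (pairL (compL f l) (compL g r)) => -[x y].
case: (fs x) => a <-; case: (gs y) => b <-.
by exists (row_mx a b); apply/pairE; rewrite /= row_mxKl row_mxKr.
Qed.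

Lemma proj_lift (P : lmod) : projective P -> forall (B C : lmod) (g : {linear B -> C}),
  surjective g -> forall h : {linear P -> C}, exists k : {linear P -> B}, forall x, g (k x) = h x.
Proof. by []. Qed.

Lemma proj_retr (F X : lmod) : retr F X -> projective X -> projective F.
Proof.
move=> [i [p ip]] pX B C g gs h.
have [k hk] := pX B C g gs (compL h p).
by exists (compL k i) => x; rewrite compLE hk compLE ip.
Qed.

Lemma inl_lin (P Q : lmod) a (x y : P) :
  ((a *: x + y, 0) : (P * Q)%type) = a *: (x, 0) + (y, 0).
Proof. by apply/pairE; rewrite /= scaler0 addr0. Qed.
Lemma inr_lin (P Q : lmod) a (x y : Q) :
  ((0, a *: x + y) : (P * Q)%type) = a *: (0, x) + (0, y).
Proof. by apply/pairE; rewrite /= scaler0 addr0. Qed.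
Definition inlL (P Q : lmod) : {linear P -> (P * Q)%type} := mkLin (@inl_lin P Q).
Definition inrL (P Q : lmod) : {linear Q -> (P * Q)%type} := mkLin (@inr_lin P Q).

Lemma sum_lin (U V : lmod) (f g : {linear U -> V}) a x y :
  (fun u => f u + g u) (a *: x + y) = a *: (fun u => f u + g u) x + (fun u => f u + g u) y.
Proof. by rewrite /= !linearP scalerDr addrACA. Qed.
Definition sumL (U V : lmod) (f g : {linear U -> V}) : {linear U -> V} := mkLin (sum_lin f g).
Lemma sumLE (U V : lmod) (f g : {linear U -> V}) x : sumL f g x = f x + g x. Proof. by []. Qed.

Lemma pair_split (P Q : lmod) (x : (P * Q)%type) : x = inlL P Q x.1 + inrL P Q x.2.
Proof. by case: x => a b; apply/pairE; rewrite /= addr0 add0r. Qed.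

Lemma proj_prod (P Q : lmod) : projective P -> projective Q -> projective (P * Q)%type.
Proof.
move=> pP pQ B C g gs h.
have [k1 hk1] := pP B C g gs (compL h (inlL P Q)).
have [k2 hk2] := pQ B C g gs (compL h (inrL P Q)).
exists (sumL (compL k1 (fstL _ _)) (compL k2 (sndL _ _))) => x.
rewrite sumLE linearD !compLE hk1 hk2 !compLE -linearD.
by rewrite -pair_split.
Qed.

Lemma proj_iso (M N : lmod) : isoM M N -> projective M -> projective N.
Proof. by move=> h; apply: proj_retr; apply: iso_retr; exact: iso_sym. Qed.

Lemma proj_free n : projective (Fr n).
Proof.
move=> B C g gs h.
have ex : forall j, exists x, g x == h 'e_j.
  by move=> j; case: (gs (h 'e_j)) => x hx; exists x; apply/eqP.
pose y := fun j => xchoose (ex j).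
exists (genL y) => r; rewrite genLE linear_sum (lin_row_sum h).
by apply: eq_bigr => j _; rewrite linearZ (eqP (xchooseP (ex j))).
Qed.

Lemma regZ (a r : R^o) : a *: r = a * r. Proof. by []. Qed.

Definition regF (C : lmod) (y : C) (r : R^o) : C := (r : R) *: y.
Lemma reg_lin (C : lmod) (y : C) a (x z : R^o) :
  regF y (a *: x + z) = a *: regF y x + regF y z.
Proof. by rewrite /regF scalerDl regZ scalerA. Qed.
Definition regL (C : lmod) (y : C) : {linear R^o -> C} := mkLin (reg_lin y).

Lemma lin_reg (C : lmod) (h : {linear R^o -> C}) (r : R^o) : h r = (r : R) *: h 1.
Proof. by rewrite -linearZ regZ mulr1. Qed.

Lemma proj_reg : projective (R^o : lmod).
Proof.
move=> B C g gs h; case: (gs (h 1)) => y hy.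
by exists (regL y) => r; rewrite (lin_reg h) /= /regF linearZ hy.
Qed.

Lemma fgen_reg : fgen (R^o : lmod).
Proof.
exists 1%N, (genL (fun _ => (1 : R^o))) => r; exists (r%:M); rewrite genLE big_ord1.
by rewrite mxE eqxx mulr1n regZ mulr1.
Qed.

Lemma fgen_free n : fgen (Fr n).
Proof. by exists n, (idL _) => r; exists r. Qed.

Definition fgproj (M : lmod) := projective M /\ fgen M.
Lemma fg_projectiveP (M : lmod) : fg_projective M <-> fgproj M.
Proof. by rewrite /fg_projective /fgproj; split=> -[h1 h2]; split=> //; apply/fin_genP. Qed.

Lemma fgproj_retr (F X : lmod) : retr F X -> fgproj X -> fgproj F.
Proof. by move=> h [h1 h2]; split; [exact: proj_retr h h1|exact: fgen_retr h h2]. Qed.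
Lemma fgproj_prod (P Q : lmod) : fgproj P -> fgproj Q -> fgproj (P * Q)%type.
Proof. by move=> [h1 h2] [h3 h4]; split; [exact: proj_prod|exact: fgen_prod]. Qed.
Lemma fgproj_free n : fgproj (Fr n).
Proof. by split; [exact: proj_free|exact: fgen_free]. Qed.
Lemma fgproj_reg : fgproj (R^o : lmod).
Proof. by split; [exact: proj_reg|exact: fgen_reg]. Qed.

Lemma Z0 (x : Fr 0) : x = 0. Proof. exact: thinmx0. Qed.

End Classes.

Section Res2.
Variable R : pzRingType.
Local Notation lmod := (lmodType R).
Local Notation Fr n := ('rV[R]_n : lmod).

Lemma bij_lin_iso (U V : lmod) (f : {linear U -> V}) :
  injective f -> surjective f -> isoM U V.
Proof.
move=> fi fs.
have ex : forall y, exists x, f x == y by move=> y; case: (fs y) => x hx; exists x; apply/eqP.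
pose g := fun y => xchoose (ex y).
have gK : cancel g f by move=> y; exact/eqP/(xchooseP (ex y)).
apply: (@bij_iso _ _ _ f g) => // x; apply: fi; exact: gK.
Qed.

Section Conv.
Variable Q : lmod -> Prop.
Hypothesis Qiso : forall M N, isoM M N -> Q M -> Q N.

Lemma res_to_Res j : forall M, resolution Q j M -> Res Q Q j M.
Proof.
elim: j => [|j IH] M [P [d [e [HQ [es H]]]]].
  by apply: (Qiso (bij_lin_iso H es)); exact: HQ.
case: H => [[e0 eE] [Hex dinj]].
exists (P 0%N), (ker e), (valL _), e; split; first exact: HQ.
split; first exact: kerL_ses.
apply: IH.
have h0 : forall x, kerP e (d 0%N x) by move=> x; exact: e0.
exists (fun i => P i.+1), (fun i => d i.+1), (coL (P := kerP e) (f := d 0%N) h0).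
split; first by move=> i hi; apply: HQ.
split.
  move=> y; case: (eE _ (ker_mem y)) => x hx; exists x; apply: val_inj; by rewrite coLE.
case: j HQ Hex dinj => [|j] HQ Hex dinj.
  by move=> x y /(congr1 val); rewrite !coLE; exact: dinj.
have [e1 eE1] := Hex 0%N isT.
split.
  split; first by move=> x; apply: val_inj; rewrite coLE e1.
  by move=> y /(congr1 val); rewrite coLE; exact: eE1.
split=> //; by move=> i hi; apply: Hex.
Qed.

Lemma Res_to_res j : forall M, Res Q Q j M -> resolution Q j M.
Proof.
elim: j => [|j IH] M.
  move=> QM; exists (fun _ => M), (fun _ => idL M), (idL M).
  by split=> //; split=> // y; exists y.
move=> [P0 [K [f [g [QP [[fi [[fK fE] gs]] RK]]]]]].
have [PK [dK [eK [HQK [esK HK]]]]] := IH _ RK.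
pose P' := fun i => match i with 0%N => P0 | i'.+1 => PK i' end.
pose d' := fun i => match i return {linear P' i.+1 -> P' i} with
                    | 0%N => compL f eK | i'.+1 => dK i' end.
exists P', d', g; split.
  by case=> [|i] hi //=; apply: HQK.
split=> //; split.
  split; first by move=> x; rewrite /= fK.
  move=> y /fE [k <-]; case: (esK k) => x <-; by exists x.
case: j IH RK HQK HK => [|j] IH RK HQK HK.
  by split=> // x y /= /fi /HK.
case: HK => [[e0 eE] [Hex dinj]].
split; last by [].
case=> [|i] hi /=.
  split; first by move=> x; rewrite e0 linear0.
  by move=> y; rewrite -(linear0 f) => /fi /eE.
exact: Hex.
Qed.
End Conv.

Lemma proj_iso' (M N : lmod) : isoM M N -> projective M -> projective N.
Proof. exact: proj_iso. Qed.
Lemma fgproj_iso (M N : lmod) : isoM M N -> fgproj M -> fgproj N.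
Proof. by move=> h; apply: fgproj_retr; apply: iso_retr; exact: iso_sym. Qed.
Lemma fgen_iso (M N : lmod) : isoM M N -> fgen M -> fgen N.
Proof. by move=> h; apply: fgen_retr; apply: iso_retr; exact: iso_sym. Qed.
Lemma fg_projective_iso (M N : lmod) : isoM M N -> fg_projective M -> fg_projective N.
Proof. by move=> h /fg_projectiveP hM; apply/fg_projectiveP; exact: fgproj_iso h hM. Qed.

Definition ResP := Res (@projective R) (@projective R).
Definition ResG := Res (@fgproj R) (@fgproj R).
Definition ResF := Res (@fgen R) (@fgproj R).

Lemma ResP_retr m (F X : lmod) : retr F X -> ResP m X -> ResP m F.
Proof. apply: Res_retr => //; [exact: proj_retr|exact: proj_prod|exact: proj_prod]. Qed.
Lemma ResG_retr m (F X : lmod) : retr F X -> ResG m X -> ResG m F.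
Proof.
apply: Res_retr => //; [exact: fgproj_retr|exact: fgproj_prod|by move=> P []|exact: fgproj_prod].
Qed.
Lemma ResF_retr m (F X : lmod) : retr F X -> ResF m X -> ResF m F.
Proof.
apply: Res_retr => //; [exact: fgen_retr| |by move=> P []|exact: fgproj_prod].
by move=> M Q h [_ h']; exact: fgen_prod.
Qed.
Lemma ResP_iso m (M N : lmod) : isoM M N -> ResP m M -> ResP m N.
Proof. by move=> h; apply: ResP_retr; apply: iso_retr; exact: iso_sym. Qed.
Lemma ResG_iso m (M N : lmod) : isoM M N -> ResG m M -> ResG m N.
Proof. by move=> h; apply: ResG_retr; apply: iso_retr; exact: iso_sym. Qed.
Lemma ResF_iso m (M N : lmod) : isoM M N -> ResF m M -> ResF m N.
Proof. by move=> h; apply: ResF_retr; apply: iso_retr; exact: iso_sym. Qed.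

Lemma ResP_syz m (M P K : lmod) (f : {linear K -> P}) (g : {linear P -> M}) :
  ResP m.+1 M -> projective P -> short_exact f g -> ResP m K.
Proof. apply: Res_syz => //; [exact: proj_retr|exact: proj_prod|exact: proj_prod]. Qed.
Lemma ResF_syz m (M P K : lmod) (f : {linear K -> P}) (g : {linear P -> M}) :
  ResF m.+1 M -> fgproj P -> short_exact f g -> ResF m K.
Proof.
apply: Res_syz => //; [exact: fgen_retr| |by move=> P' []|exact: fgproj_prod].
by move=> M' Q h [_ h']; exact: fgen_prod.
Qed.

Lemma zero_ses (M : lmod) : short_exact (zeroL (Fr 0) M) (idL M).
Proof.
split; first by move=> x y _; rewrite (Z0 x) (Z0 y).
split; last by move=> y; exists y.
by split=> // y; rewrite /= => ->; exists 0.
Qed.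

Lemma proj_Z : projective (Fr 0). Proof. exact: proj_free. Qed.
Lemma fgproj_Z : fgproj (Fr 0). Proof. exact: fgproj_free. Qed.

Lemma Res_pad (Cl : lmod -> Prop) : Cl (Fr 0) -> forall m M, Res Cl Cl m M -> Res Cl Cl m.+1 M.
Proof.
move=> CZ; elim=> [|m IH] M.
  by move=> CM; exists M, (Fr 0), (zeroL _ M), (idL M); split=> //; split=> //; exact: zero_ses.
move=> [P [K [f [g [CP [ses RK]]]]]]; exists P, K, f, g; split=> //; split=> //; exact: IH.
Qed.

Lemma Res_pad_le (Cl : lmod -> Prop) : Cl (Fr 0) -> forall m k M, (m <= k)%N ->
  Res Cl Cl m M -> Res Cl Cl k M.
Proof.
move=> CZ m k M /subnK <-; elim: (k - m)%N => [|i IH] //= h.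
by apply: Res_pad => //; exact: IH.
Qed.

Lemma Res_prod2 (Cl : lmod -> Prop) : (forall P Q, Cl P -> Cl Q -> Cl (P * Q)%type) ->
  forall m M N, Res Cl Cl m M -> Res Cl Cl m N -> Res Cl Cl m (M * N)%type.
Proof.
move=> Cp; elim=> [|m IH] M N /=; first exact: Cp.
move=> [P [K [f [g [CP [[fi [[fK fE] gs]] RK]]]]]].
move=> [P' [K' [f' [g' [CP' [[fi' [[fK' fE'] gs']] RK']]]]]].
exists (P * P')%type, (K * K')%type.
exists (pairL (compL f (fstL _ _)) (compL f' (sndL _ _))).
exists (pairL (compL g (fstL _ _)) (compL g' (sndL _ _))).
split; first exact: Cp.
split; last exact: IH.
split.
  by move=> [x y] [x' y'] /pairE [/= /fi -> /fi' ->].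
split; first split.
  by move=> x; apply/pairE; rewrite /= fK fK'.
  move=> [y y'] /pairE [/= /fE [k hk] /fE' [k' hk']]; exists (k, k').
  by apply/pairE; rewrite /= hk hk'.
move=> [y y']; case: (gs y) => x hx; case: (gs' y') => x' hx'; exists (x, x').
by apply/pairE; rewrite /= hx hx'.
Qed.

Lemma ResG_F0 : forall m (M : lmod), fgproj M -> ResF m M.
Proof.
elim=> [|m IH] M CM; first by case: CM.
exists M, (Fr 0), (zeroL _ M), (idL M); split=> //; split; first exact: zero_ses.
exact: IH fgproj_Z.
Qed.

Lemma ResG_F j : forall (M : lmod), ResG j M -> forall m, ResF m M.
Proof.
elim: j => [|j IH] M; first by move=> CM m; exact: ResG_F0.
move=> [P [K [f [g [CP [ses RK]]]]]] [|m].
  case: CP => _ fP; case: ses => _ [_ gs]; exact: fgen_img gs fP.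
by exists P, K, f, g; split=> //; split=> //; exact: IH.
Qed.

Lemma L1 k : forall (M : lmod), ResF k M -> ResP k M -> ResG k M.
Proof.
elim: k => [|k IH] M; first by move=> h1 h2; split.
move=> [P [K [f [g [CP [ses RK]]]]]] hP.
exists P, K, f, g; split=> //; split=> //; apply: IH => //.
by apply: ResP_syz hP _ ses; case: CP.
Qed.

Lemma ResG_P j (M : lmod) : ResG j M -> ResP j M.
Proof. by apply: Res_mono => P []. Qed.

End Res2.

Section Quot.
Variable R : pzRingType.
Local Notation lmod := (lmodType R).
Variables (V : lmod) (S : V -> Prop).
Let cS := cl_closed S.

Lemma canon_ex (x : V) : exists y, `[< cl S (x - y) >].
Proof. by exists x; apply/asboolP; rewrite subrr; exact: closed0 cS. Qed.
Definition canon (x : V) : V := xchoose (canon_ex x).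
Lemma canonP x : cl S (x - canon x).
Proof. exact: asboolW (xchooseP (canon_ex x)). Qed.
Lemma canon_eq x y : cl S (x - y) -> canon x = canon y.
Proof.
move=> h; apply: eq_xchoose => z; apply/asboolP/asboolP => hz.
  have -> : y - z = - (x - y) + (x - z) by rewrite opprB addrA subrK.
  exact: (closedD cS (closedN cS h) hz).
have -> : x - z = (x - y) + (y - z) by rewrite addrA subrK.
exact: (closedD cS h hz).
Qed.
Lemma canon_eqP x y : canon x = canon y <-> cl S (x - y).
Proof.
split; last exact: canon_eq.
move=> e; have h1 := canonP x; have h2 := canonP y.
have -> : x - y = (x - canon x) - (y - canon y) by rewrite e opprB addrA subrK.
exact: (closedB cS h1 h2).
Qed.
Lemma canon_idem x : canon (canon x) = canon x.
Proof. by apply: canon_eq; rewrite -opprB; exact: (closedN cS (canonP _)). Qed.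
Lemma canonDl x y : canon (canon x + y) = canon (x + y).
Proof. by apply: canon_eq; rewrite opprD addrACA subrr addr0 -opprB; exact: (closedN cS (canonP _)). Qed.
Lemma canonDr x y : canon (x + canon y) = canon (x + y).
Proof. by rewrite addrC canonDl addrC. Qed.
Lemma canonZ a x : canon (a *: canon x) = canon (a *: x).
Proof. by apply: canon_eq; rewrite -scalerBr -opprB scalerN; exact: (closedN cS (closedZ cS _ (canonP _))). Qed.
Lemma canonN x : canon (- canon x) = canon (- x).
Proof. by rewrite -!scaleN1r canonZ. Qed.

Definition quotT := {x : V | canon x == x}.
HB.instance Definition _ := Choice.on quotT.
Lemma qfix (q : quotT) : canon (val q) = val q.
Proof. exact/eqP/(valP q). Qed.
Definition qin (x : V) : quotT := exist _ (canon x) (introT eqP (canon_idem x)).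
Definition q0 : quotT := qin 0.
Definition qadd (a b : quotT) : quotT := qin (val a + val b).
Definition qopp (a : quotT) : quotT := qin (- val a).
Definition qscale r (a : quotT) : quotT := qin (r *: val a).
Lemma qinE x : val (qin x) = canon x. Proof. by []. Qed.
Lemma qaddA : associative qadd.
Proof. by move=> x y z; apply: val_inj; rewrite /= canonDl canonDr addrA. Qed.
Lemma qaddC : commutative qadd.
Proof. by move=> x y; apply: val_inj; rewrite /= addrC. Qed.
Lemma qadd0 : left_id q0 qadd.
Proof. by move=> x; apply: val_inj; rewrite /= canonDl add0r qfix. Qed.
Lemma qaddN : left_inverse q0 qopp qadd.
Proof. by move=> x; apply: val_inj; rewrite /= canonDl addNr. Qed.
HB.instance Definition _ := GRing.isZmodule.Build quotT qaddA qaddC qadd0 qaddN.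
Lemma qZA a b (x : quotT) : qscale a (qscale b x) = qscale (a * b) x.
Proof. by apply: val_inj; rewrite /= canonZ scalerA. Qed.
Lemma qZ1 : left_id 1 qscale.
Proof. by move=> x; apply: val_inj; rewrite /= scale1r qfix. Qed.
Lemma qZDr : right_distributive qscale +%R.
Proof. by move=> a x y; apply: val_inj; rewrite /= canonZ canonDl canonDr scalerDr. Qed.
Lemma qZDl v : {morph qscale^~ v : a b / a + b}.
Proof. by move=> a b; apply: val_inj; rewrite /= canonDl canonDr scalerDl. Qed.
HB.instance Definition _ := GRing.Zmodule_isLmodule.Build R quotT qZA qZ1 qZDr qZDl.

Lemma qval_add (a b : quotT) : val (a + b) = canon (val a + val b). Proof. by []. Qed.
Lemma qval_scale r (a : quotT) : val (r *: a) = canon (r *: val a). Proof. by []. Qed.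

Lemma pi_lin a x y : qin (a *: x + y) = a *: qin x + qin y.
Proof. by apply: val_inj; rewrite qval_add qval_scale /= [RHS]canonDl [RHS]canonDr -[RHS]canonDl canonZ canonDl. Qed.
Definition piL : {linear V -> quotT} := mkLin pi_lin.
Lemma piE x : val (piL x) = canon x. Proof. by []. Qed.
Lemma pi_surj : surjective piL.
Proof. by move=> q; exists (val q); apply: val_inj; rewrite piE qfix. Qed.
Lemma pi_ker x : piL x = 0 <-> cl S x.
Proof.
split.
  move=> /(congr1 val); rewrite piE /= => /canon_eqP; by rewrite subr0.
by move=> h; apply: val_inj; rewrite piE /=; apply: canon_eq; rewrite subr0.
Qed.

Section Lift.
Variables (W : lmod) (phi : {linear V -> W}).
Hypothesis phiS : forall x, cl S x -> phi x = 0.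
Lemma phi_canon x : phi (canon x) = phi x.
Proof.
have := phiS (canonP x); rewrite linearB => /eqP; rewrite subr_eq0 => /eqP ->//.
Qed.
Lemma qlift_lin a (x y : quotT) : phi (val (a *: x + y)) = a *: phi (val x) + phi (val y).
Proof. by rewrite qval_add phi_canon linearD qval_scale phi_canon linearZ. Qed.
Definition qlift : {linear quotT -> W} := mkLin qlift_lin.
Lemma qliftE x : qlift (piL x) = phi x.
Proof. by rewrite /= phi_canon. Qed.
End Lift.

Lemma first_iso (M : lmod) (p : {linear V -> M}) : surjective p ->
  (forall x, p x = 0 <-> cl S x) -> isoM quotT M.
Proof.
move=> ps pk.
have hS : forall x, cl S x -> p x = 0 by move=> x /pk.
apply: (@bij_lin_iso _ _ _ (qlift hS)).
  move=> a b /= /eqP; rewrite -subr_eq0 -linearB => /eqP /pk /canon_eqP.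
  by rewrite !qfix => h; apply: val_inj.
move=> y; case: (ps y) => x <-; exists (piL x); exact: qliftE.
Qed.
End Quot.

Section DSum.
Variable R : pzRingType.
Local Notation lmod := (lmodType R).
Variables (I : eqType) (X : I -> lmod).
Definition DSpre := forall i, X i.
HB.instance Definition _ := gen_eqMixin DSpre.
HB.instance Definition _ := gen_choiceMixin DSpre.
Definition fsupp (f : DSpre) (s : seq I) := forall i, i \notin s -> f i = 0.
Definition DS := {f : DSpre | `[< exists s, fsupp f s >]}.
HB.instance Definition _ := Choice.on DS.
Lemma DS_supp (f : DS) : exists s, fsupp (val f) s.
Proof. exact: asboolW (valP f). Qed.
Definition dsIn (f : DSpre) (h : exists s, fsupp f s) : DS := exist _ f (asboolT h).
Lemma ds0_ex : exists s, fsupp (fun i => 0 : X i) s. Proof. by exists [::]. Qed.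
Definition ds0 : DS := dsIn ds0_ex.
Lemma dsadd_ex (f g : DS) : exists s, fsupp (fun i => val f i + val g i) s.
Proof.
case: (DS_supp f) => s hs; case: (DS_supp g) => t ht; exists (s ++ t) => i.
by rewrite mem_cat negb_or => /andP [h1 h2]; rewrite hs // ht // addr0.
Qed.
Definition dsadd (f g : DS) : DS := dsIn (dsadd_ex f g).
Lemma dsscale_ex a (f : DS) : exists s, fsupp (fun i => a *: val f i) s.
Proof. by case: (DS_supp f) => s hs; exists s => i /hs ->; rewrite scaler0. Qed.
Definition dsscale a (f : DS) : DS := dsIn (dsscale_ex a f).
Lemma dsopp_ex (f : DS) : exists s, fsupp (fun i => - val f i) s.
Proof. by case: (DS_supp f) => s hs; exists s => i /hs ->; rewrite oppr0. Qed.
Definition dsopp (f : DS) : DS := dsIn (dsopp_ex f).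
Lemma dsE (f g : DS) : (forall i, val f i = val g i) -> f = g.
Proof. by move=> h; apply: val_inj; apply: functional_extensionality_dep. Qed.
Lemma dsaddA : associative dsadd.
Proof. by move=> x y z; apply: dsE => i /=; rewrite addrA. Qed.
Lemma dsaddC : commutative dsadd.
Proof. by move=> x y; apply: dsE => i /=; rewrite addrC. Qed.
Lemma dsadd0 : left_id ds0 dsadd.
Proof. by move=> x; apply: dsE => i /=; rewrite add0r. Qed.
Lemma dsaddN : left_inverse ds0 dsopp dsadd.
Proof. by move=> x; apply: dsE => i /=; rewrite addNr. Qed.
HB.instance Definition _ := GRing.isZmodule.Build DS dsaddA dsaddC dsadd0 dsaddN.
Lemma dsZA a b (x : DS) : dsscale a (dsscale b x) = dsscale (a * b) x.
Proof. by apply: dsE => i /=; rewrite scalerA. Qed.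
Lemma dsZ1 : left_id 1 dsscale.
Proof. by move=> x; apply: dsE => i /=; rewrite scale1r. Qed.
Lemma dsZDr : right_distributive dsscale +%R.
Proof. by move=> a x y; apply: dsE => i /=; rewrite scalerDr. Qed.
Lemma dsZDl v : {morph dsscale^~ v : a b / a + b}.
Proof. by move=> a b; apply: dsE => i /=; rewrite scalerDl. Qed.
HB.instance Definition _ := GRing.Zmodule_isLmodule.Build R DS dsZA dsZ1 dsZDr dsZDl.

Lemma ev_lin i a (x y : DS) : val (a *: x + y) i = a *: val x i + val y i.
Proof. by []. Qed.
Definition evL i : {linear DS -> X i} := mkLin (ev_lin i).
Lemma evLE i f : evL i f = val f i. Proof. by []. Qed.

Definition supp (f : DS) : seq I := undup (projT1 (cid (DS_supp f))).
Lemma supp_uniq f : uniq (supp f). Proof. exact: undup_uniq. Qed.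
Lemma supp_fsupp f : fsupp (val f) (supp f).
Proof. by move=> i; rewrite mem_undup; exact: (projT2 (cid (DS_supp f))). Qed.

Lemma sum_supp_eq (N : zmodType) (F : I -> N) (s1 s2 : seq I) : uniq s1 -> uniq s2 ->
  (forall i, i \notin s1 -> F i = 0) -> (forall i, i \notin s2 -> F i = 0) ->
  \sum_(i <- s1) F i = \sum_(i <- s2) F i.
Proof.
move=> u1 u2 h1 h2.
have e1 : \sum_(i <- s1) F i = \sum_(i <- s1 | i \in s2) F i.
  rewrite [RHS]big_mkcond /=; apply: eq_bigr => i _.
  by case: (boolP (i \in s2)) => // /h2.
have e2 : \sum_(i <- s2) F i = \sum_(i <- s2 | i \in s1) F i.
  rewrite [RHS]big_mkcond /=; apply: eq_bigr => i _.
  by case: (boolP (i \in s1)) => // /h1.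
rewrite e1 e2 -[LHS]big_filter -[RHS]big_filter; apply: perm_big; apply: uniq_perm; rewrite ?filter_uniq //.
by move=> i; rewrite !mem_filter andbC.
Qed.

Variables (N : lmod) (h : forall i, {linear X i -> N}).
Definition dsumF (f : DS) : N := \sum_(i <- supp f) h i (val f i).
Lemma dsumF_eq f s : uniq s -> fsupp (val f) s -> dsumF f = \sum_(i <- s) h i (val f i).
Proof.
move=> us hs; apply: sum_supp_eq => //; first exact: supp_uniq.
  by move=> i /supp_fsupp ->; rewrite linear0.
by move=> i /hs ->; rewrite linear0.
Qed.
Lemma dsumF_lin a x y : dsumF (a *: x + y) = a *: dsumF x + dsumF y.
Proof.
pose s := undup (supp x ++ supp y).
have us : uniq s by exact: undup_uniq.
have hx : fsupp (val x) s.
  by move=> i; rewrite mem_undup mem_cat negb_or => /andP [/supp_fsupp].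
have hy : fsupp (val y) s.
  by move=> i; rewrite mem_undup mem_cat negb_or => /andP [_ /supp_fsupp].
have hxy : fsupp (val (a *: x + y)) s.
  by move=> i hi; rewrite ev_lin hx // hy // scaler0 addr0.
rewrite (dsumF_eq us hx) (dsumF_eq us hy) (dsumF_eq us hxy) scaler_sumr -big_split.
by apply: eq_bigr => i _; rewrite ev_lin linearP.
Qed.
Definition dsumL : {linear DS -> N} := mkLin dsumF_lin.
Lemma dsumLE f s : uniq s -> fsupp (val f) s -> dsumL f = \sum_(i <- s) h i (val f i).
Proof. exact: dsumF_eq. Qed.

Definition injF i (x : X i) : DSpre :=
  fun j => if i =P j is ReflectT e then ecast j (X j) e x else 0.
Lemma injF_supp (i : I) (x : X i) : fsupp (injF x) [:: i].
Proof.
move=> j; rewrite inE => hj; rewrite /injF; case: eqP => // e.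
by rewrite e eqxx in hj.
Qed.
Definition injD i (x : X i) : DS := dsIn (ex_intro _ _ (injF_supp x)).
Lemma injF_self (i : I) (x : X i) : injF x i = x.
Proof. by rewrite /injF; case: eqP => // e; rewrite (eq_irrelevance e (erefl i)). Qed.
Lemma inj_lin (i : I) a (x y : X i) : injD (a *: x + y) = a *: injD x + injD y.
Proof.
apply: dsE => j /=; rewrite /injF; case: eqP => [e|_]; last by rewrite scaler0 addr0.
by case: j / e.
Qed.
Definition injL i : {linear X i -> DS} := mkLin (@inj_lin i).
Lemma sum_inj (i : I) (x : X i) : dsumL (injL i x) = h i x.
Proof. by rewrite (dsumLE (f := injL i x) (s := [:: i])) //= ?big_seq1 ?injF_self //; exact: injF_supp. Qed.

End DSum.

Section H.
Variable R : pzRingType.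
Local Notation lmod := (lmodType R).
Local Notation Fr n := ('rV[R]_n : lmod).
Variable Cl : lmod -> Prop.
Variable N : lmod.

Definition Idx := {b : nat & {S : 'rV[R]_b -> Prop &
   {h : {linear quotT S -> N} | Cl (quotT S)}}}.
HB.instance Definition _ := gen_eqMixin Idx.
Definition XI (i : Idx) : lmod := quotT (projT1 (projT2 i)).
Definition hI (i : Idx) : {linear XI i -> N} := proj1_sig (projT2 (projT2 i)).
Lemma clI i : Cl (XI i). Proof. exact: (proj2_sig (projT2 (projT2 i))). Qed.

Variables (c : nat) (gen : {linear Fr c -> N}).
Hypothesis gen_s : surjective gen.

Definition Big : lmod := (DS XI * Fr c)%type.
Definition gB : {linear Big -> N} :=
  sumL (compL (dsumL hI) (fstL _ _)) (compL gen (sndL _ _)).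
Lemma gBE z : gB z = dsumL hI z.1 + gen z.2. Proof. by []. Qed.
Lemma gB_s : surjective gB.
Proof. by move=> y; case: (gen_s y) => r <-; exists (0, r); rewrite gBE linear0 add0r. Qed.

Fixpoint PL (l : seq Idx) : lmod := if l is i :: l' then (XI i * PL l')%type else Fr c.
Fixpoint alphaF (l : seq Idx) (z : Big) : PL l :=
  match l return PL l with [::] => z.2 | i :: l' => (val z.1 i, @alphaF l' z) end.
Arguments alphaF : clear implicits.
Lemma alpha_lin l a x y : alphaF l (a *: x + y) = a *: alphaF l x + alphaF l y.
Proof. by elim: l => [|i l IH] //=; apply/pairE; split=> //=; rewrite IH. Qed.
Fixpoint betaF (l : seq Idx) : PL l -> N :=
  match l return PL l -> N with
  | [::] => fun r => gen r
  | i :: l' => fun x => hI i x.1 + @betaF l' x.2 end.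
Arguments betaF : clear implicits.
Lemma beta_lin l a x y : betaF l (a *: x + y) = a *: betaF l x + betaF l y.
Proof.
elim: l x y => [|i l IH] x y /=; first by rewrite linearP.
by rewrite linearP IH scalerDr addrACA.
Qed.
Lemma beta_alpha l z : betaF l (alphaF l z) = \sum_(i <- l) hI i (val z.1 i) + gen z.2.
Proof. by elim: l => [|i l IH] /=; rewrite ?big_nil ?add0r // big_cons IH addrA. Qed.

Hypothesis Cl_free : forall c, Cl (Fr c).
Hypothesis Cl_prod : forall M M', Cl M -> Cl M' -> Cl (M * M')%type.
Lemma Cl_PL l : Cl (PL l).
Proof. by elim: l => [|i l IH] /=; [exact: Cl_free|apply: Cl_prod => //; exact: clI]. Qed.

Hypothesis Cl_iso : forall M M', isoM M M' -> Cl M -> Cl M'.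
Hypothesis Cl_fgen : forall M, Cl M -> fgen M.

Lemma hom_ex M : Cl M -> hom_exact M (valL (kerP gB)) gB.
Proof.
move=> ClM; split; first by move=> h1 h2 e x; apply: val_inj; exact: e.
split.
  move=> h hh; exists (coL (P := kerP gB) (f := h) hh) => x; exact: coLE.
move=> h.
case: (Cl_fgen ClM) => b [p ps].
have pk : forall x, p x = 0 <-> cl (kerP p) x.
  by move=> x; rewrite (cl_id (kerP_closed p)).
have isoQ := first_iso ps pk.
have ClQ : Cl (quotT (kerP p)) by apply: Cl_iso ClM; exact: iso_sym.
case: isoQ => psi [psii [c1 c2]].
pose i : Idx := existT _ b (existT _ (kerP p) (exist _ (compL h psi) ClQ)).
exists (pairL (compL (@injL _ _ XI i) psii) (zeroL M (Fr c))) => x.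
rewrite gBE (_ : (pairL _ _ x).1 = injL XI i (psii x)) //.
rewrite (_ : (pairL _ _ x).2 = 0) // linear0 addr0 sum_inj.
by rewrite (_ : hI i (psii x) = h (psi (psii x))) // c2.
Qed.

Lemma H_retr_sec :
  (forall (A B C : lmod) (f : {linear A -> B}) (g : {linear B -> C}),
    (short_exact f g /\ forall M, Cl M -> hom_exact M f g) -> hom_exact N f g) ->
  exists X, Cl X /\ retr N X.
Proof.
move=> Nproj.
have [_ [_ H3]] := Nproj _ _ _ _ _ (conj (kerL_ses gB_s) hom_ex).
have [s hs] := H3 (idL N).
pose L := undup (flatten [seq supp (s (gen 'e_j)).1 | j <- enum 'I_c]).
have suppL : forall y, fsupp (val (s y).1) L.
  move=> y i iL; case: (gen_s y) => r <-.
  pose Phi := compL (evL XI i) (compL (fstL _ _) (compL s gen)).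
  have -> : val (s (gen r)).1 i = Phi r by [].
  rewrite lin_row_sum big1 // => j _.
  rewrite (_ : Phi 'e_j = val (s (gen 'e_j)).1 i) //.
  rewrite (supp_fsupp (f := (s (gen 'e_j)).1) (i := i)) ?scaler0 //.
  apply: contra iL => hi; rewrite mem_undup; apply/flatten_mapP.
  by exists j => //; rewrite mem_enum.
exists (PL L); split; first exact: Cl_PL.
exists (compL (mkLin (@alpha_lin L)) s), (mkLin (@beta_lin L)) => y.
rewrite compLE /= beta_alpha -(dsumLE hI (undup_uniq _) (suppL y)).
by rewrite -gBE hs.
Qed.
End H.

Lemma H_retr (R : pzRingType) (Cl : lmodType R -> Prop) (N : lmodType R) :
  (forall c, Cl ('rV[R]_c)) ->
  (forall M M', Cl M -> Cl M' -> Cl (M * M')%type) ->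
  (forall M M', isoM M M' -> Cl M -> Cl M') ->
  (forall M, Cl M -> fgen M) -> fgen N ->
  (forall (A B C : lmodType R) (f : {linear A -> B}) (g : {linear B -> C}),
    (short_exact f g /\ forall M, Cl M -> hom_exact M f g) -> hom_exact N f g) ->
  exists X, Cl X /\ retr N X.
Proof.
move=> h1 h2 h3 h4 [c [gen gs]] h5.
exact: (@H_retr_sec R Cl N c gen gs h1 h2 h3 h4 h5).
Qed.

Section FP.
Variable R : pzRingType.
Local Notation lmod := (lmodType R).
Local Notation Fr n := ('rV[R]_n : lmod).

Definition fpres (M : lmod) := exists b c (q : {linear Fr b -> M}) (rho : {linear Fr c -> Fr b}),
  surjective q /\ (forall x, q x = 0 <-> exists y, rho y = x).

Lemma nth_map_enum (T : Type) (x0 : T) n (F : 'I_n -> T) (i : 'I_n) :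
  nth x0 [seq F j | j <- enum 'I_n] i = F i.
Proof. by rewrite (nth_map i) ?size_enum_ord // nth_ord_enum. Qed.

Lemma row_entry_sum n c (y : 'rV[R]_c) (F : 'I_c -> 'rV[R]_n) i :
  (\sum_(k < c) y 0 k *: F k) 0 i = \sum_(k < c) y 0 k * F k 0 i.
Proof. by rewrite summxE; apply: eq_bigr => k _; rewrite mxE. Qed.

Lemma fpres_fin_pres (M : lmod) : fpres M -> fin_pres M.
Proof.
move=> [b [c [q [rho [qs hq]]]]].
pose s := [seq q 'e_j | j <- enum 'I_b].
have es : size s = b by rewrite size_map size_enum_ord.
have sE : forall i : 'I_(size s), s`_i = q 'e_(cast_ord es i).
  by move=> i; rewrite -[in LHS](_ : (cast_ord es i : nat) = i) // nth_map_enum.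
pose rels := [seq (fun i : 'I_(size s) => rho 'e_k 0 (cast_ord es i)) | k <- enum 'I_c].
have er : size rels = c by rewrite size_map size_enum_ord.
have rE : forall k : 'I_(size rels), nth (fun _ => 0) rels k =
    (fun i : 'I_(size s) => rho 'e_(cast_ord er k) 0 (cast_ord es i)).
  by move=> k; rewrite -[in LHS](_ : (cast_ord er k : nat) = k) // nth_map_enum.
have sumE : forall r : 'I_(size s) -> R,
    \sum_(i < size s) r i *: s`_i = q (\row_j r (cast_ord (esym es) j)).
  move=> r; rewrite (lin_row_sum q) -(big_cast_ord es); apply: eq_bigr => i _.
  by rewrite sE mxE cast_ordK.
exists s; split.
  move=> x; case: (qs x) => r <-; exists (fun i => r 0 (cast_ord es i)).
  rewrite sumE; congr (q _); apply/matrixP => i j; rewrite !mxE cast_ordKV.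
  by rewrite (ord1 i).
exists rels; split.
  move=> k; rewrite rE sumE; apply/hq; exists 'e_(cast_ord er k).
  by apply/matrixP => i j; rewrite (ord1 i) !mxE cast_ordKV.
move=> r; rewrite sumE => /hq [y hy].
exists (fun k => y 0 (cast_ord er k)) => i.
have := congr1 (fun m : 'rV[R]_b => m 0 (cast_ord es i)) hy.
rewrite /= mxE cast_ordK => <-.
rewrite (lin_row_sum rho) row_entry_sum -(big_cast_ord er); apply: eq_bigr => k _.
by rewrite rE.
Qed.

Lemma fin_pres_fpres (M : lmod) : fin_pres M -> fpres M.
Proof.
move=> [s [hs [rels [h0 hr]]]].
pose q := genL (fun i : 'I_(size s) => s`_i).
pose rw := fun k : 'I_(size rels) => \row_i (nth (fun _ => 0) rels k) i.
exists (size s), (size rels), q, (genL rw); split.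
  move=> x; case: (hs x) => r ->; exists (\row_i r i); rewrite genLE.
  by apply: eq_bigr => i _; rewrite mxE.
move=> x; split.
  rewrite genLE => hx; case: (hr (fun i => x 0 i) hx) => cc hc.
  exists (\row_k cc k); rewrite genLE; apply/matrixP => i j; rewrite (ord1 i).
  by rewrite row_entry_sum hc; apply: eq_bigr => k _; rewrite !mxE.
move=> [y <-]; rewrite [genL rw y]genLE linear_sum big1 // => k _.
rewrite genLE (eq_bigr (fun j => y 0 k *: (rw k 0 j *: s`_j))); last first.
  by move=> j _; rewrite mxE scalerA.
rewrite -scaler_sumr (_ : \sum_(j < size s) rw k 0 j *: s`_j = 0) ?scaler0 //.
by rewrite -[RHS](h0 k); apply: eq_bigr => j _; rewrite mxE.
Qed.

Lemma fpres_ResF (M : lmod) : fpres M -> ResF 1 M.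
Proof.
move=> [b [c [q [rho [qs hq]]]]].
exists (Fr b), (ker q), (valL _), q; split; first exact: fgproj_free.
split; first exact: kerL_ses.
have h : forall y, kerP q (rho y) by move=> y; apply/hq; exists y.
exists c, (coL (P := kerP q) (f := rho) h) => x.
case: (proj1 (hq (val x)) (ker_mem x)) => y hy; exists y; apply: val_inj.
by rewrite coLE.
Qed.

Lemma ResF_fpres (M : lmod) : ResF 1 M -> fpres M.
Proof.
move=> hM; have := hM; move=> [P [K [f [g [[Pp [b [pi pis]]] [ses fK]]]]]].
have gs : surjective g by case: ses => _ [].
pose q := compL g pi.
have qs : surjective q by move=> y; case: (gs y) => x <-; case: (pis x) => r <-; exists r.
have hL : ResF 0 (ker q) by apply: (ResF_syz hM (fgproj_free _ b) (kerL_ses qs)).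
case: hL => c [rho rhos].
exists b, c, q, (compL (valL _) rho); split=> // x; split.
  move=> hx; case: (rhos (kerIn hx)) => y hy; exists y; by rewrite compLE hy.
by move=> [y <-]; rewrite compLE; exact: (ker_mem (rho y)).
Qed.

Lemma fin_presP (M : lmod) : fin_pres M <-> ResF 1 M.
Proof.
split; first by move/fin_pres_fpres/fpres_ResF.
by move/ResF_fpres/fpres_fin_pres.
Qed.

Lemma fgen_ext (A L B : lmod) (tau : {linear A -> L}) (sigma : {linear L -> B}) :
  surjective sigma -> (forall l, sigma l = 0 -> exists a, tau a = l) ->
  fgen A -> fgen B -> fgen L.
Proof.
move=> ss hk [m [al als]] [n [be bes]].
have [be' hbe'] := proj_free (n := n) ss be.
apply: (fgen_img (h := sumL (compL (compL tau al) (fstL _ _)) (compL be' (sndL _ _)))).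
  move=> l; case: (bes (sigma l)) => v hv.
  have : sigma (l - be' v) = 0 by rewrite linearB hbe' hv subrr.
  case/hk => a ha; case: (als a) => u hu; exists (u, v).
  by rewrite sumLE /= hu ha subrK.
exact: fgen_prod (fgen_free _ _) (fgen_free _ _).
Qed.

Lemma fgen_ker_img (K J : lmod) (th : {linear K -> J}) :
  surjective th -> fgen K -> ResF 1 J -> fgen (ker th).
Proof.
move=> ths [c [rho rhos]] hJ.
pose q := compL th rho.
have qs : surjective q by move=> y; case: (ths y) => x <-; case: (rhos x) => r <-; exists r.
have hL : ResF 0 (ker q) by apply: (ResF_syz hJ (fgproj_free _ c) (kerL_ses qs)).
have h : forall l : ker q, kerP th (rho (val l)) by move=> l; exact: (ker_mem l).
apply: (fgen_img (h := coL (P := kerP th) (f := compL rho (valL _)) h)) => // k.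
case: (rhos (val k)) => x hx.
have hq : q x = 0 by rewrite compLE hx; exact: ker_mem.
by exists (kerIn hq); apply: val_inj; rewrite coLE /= hx.
Qed.

Lemma ResF1_ext (K' K J : lmod) (a : {linear K' -> K}) (th : {linear K -> J}) :
  short_exact a th -> ResF 1 K' -> ResF 1 J -> ResF 1 K.
Proof.
move=> [ai [[a0 aE] ths]] [P' [L' [f' [g' [[Pp' Pf'] [ses' fL']]]]]]
  [P'' [L'' [f'' [g'' [[Pp'' Pf''] [ses'' fL'']]]]]].
have gs' : surjective g' by case: ses' => _ [].
have gs'' : surjective g'' by case: ses'' => _ [].
have [la hla] := Pp'' _ _ _ ths g''.
pose Phi := sumL (compL (compL a g') (fstL P' P'')) (compL la (sndL P' P'')).
have PhiE : forall z, Phi z = a (g' z.1) + la z.2 by [].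
have Phis : surjective Phi.
  move=> k; case: (gs'' (th k)) => y hy.
  have : th (k - la y) = 0 by rewrite linearB hla hy subrr.
  case/aE => k' hk'; case: (gs' k') => x hx; exists (x, y).
  by rewrite PhiE /= hx hk' subrK.
exists (P' * P'')%type, (ker Phi), (valL _), Phi; split.
  by split; [exact: proj_prod|exact: fgen_prod].
split; first exact: kerL_ses.
have fk' : fgen (ker g') by apply: (fgen_iso (ses_iso_ker ses') fL').
have fk'' : fgen (ker g'') by apply: (fgen_iso (ses_iso_ker ses'') fL'').
have h1 : forall x : ker g', kerP Phi (val x, 0).
  by move=> x; rewrite /kerP PhiE /= (ker_mem x) linear0 linear0 addr0.
pose tau := coL (P := kerP Phi) (f := compL (inlL P' P'') (valL (kerP g'))) h1.
have h2 : forall z : ker Phi, kerP g'' (val z).2.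
  move=> z; rewrite /kerP -hla.
  have := ker_mem z; rewrite PhiE => /(congr1 th); rewrite linearD a0 add0r linear0.
  done.
pose sigma := coL (P := kerP g'') (f := compL (sndL P' P'') (valL (kerP Phi))) h2.
apply: (@fgen_ext _ _ _ tau sigma) => //.
  move=> y.
  have : th (la (val y)) = 0 by rewrite hla; exact: ker_mem.
  case/aE => k' hk'; case: (gs' k') => x hx.
  have hz : Phi (- x, val y) = 0 by rewrite PhiE /= linearN linearN hx hk' addNr.
  by exists (kerIn hz); apply: val_inj.
move=> z hz.
have z2 : (val z).2 = 0 by have := congr1 val hz.
have : g' (val z).1 = 0.
  apply: ai; rewrite linear0; have := ker_mem z; rewrite PhiE z2 linear0 addr0 //.
by move=> hg; exists (kerIn hg); apply: val_inj; apply/pairE; split=> //=; rewrite z2.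

Qed.

End FP.

Section Coh.
Variable R : pzRingType.
Local Notation lmod := (lmodType R).
Local Notation Fr n := ('rV[R]_n : lmod).

Lemma p1_lin b a (x y : Fr b.+1) : ((a *: x + y) 0 ord0 : R^o) = a *: (x 0 ord0 : R^o) + y 0 ord0.
Proof. by rewrite !mxE. Qed.
Definition p1L b : {linear Fr b.+1 -> R^o} := mkLin (@p1_lin b).
Definition p2F b (x : Fr b.+1) : Fr b := \row_j x 0 (lift ord0 j).
Lemma p2_lin b a (x y : Fr b.+1) : p2F (a *: x + y) = a *: p2F x + p2F y.
Proof. by apply/matrixP => i j; rewrite !mxE. Qed.
Definition p2L b : {linear Fr b.+1 -> Fr b} := mkLin (@p2_lin b).
Lemma p12_0 b (x : Fr b.+1) : p1L b x = 0 -> p2L b x = 0 -> x = 0.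
Proof.
move=> h1 h2; apply/matrixP => i j; rewrite (ord1 i) mxE.
case: (unliftP ord0 j) => [j' ->|->] //.
by have := congr1 (fun m : 'rV[R]_b => m 0 j') h2; rewrite /= !mxE.
Qed.

Lemma lin_inj0 (U V : lmod) (f : {linear U -> V}) : (forall x, f x = 0 -> x = 0) -> injective f.
Proof. by move=> h x y e; apply/eqP; rewrite -subr_eq0; apply/eqP/h; rewrite linearB e subrr. Qed.

Hypothesis coh : left_coherent R.

Lemma CO1 b : forall (K : lmod) (io : {linear K -> Fr b}), injective io -> fgen K -> ResF 1 K.
Proof.
elim: b => [|b IH] K io ioi fK.
  apply: ResG_F0; apply: (fgproj_iso (M := Fr 0)); last exact: fgproj_Z.
  apply: (@bij_iso _ _ _ (zeroL (Fr 0) K) io).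
    by move=> x; rewrite [RHS]Z0; exact: Z0.
  by move=> y /=; apply: ioi; rewrite [LHS]Z0 [RHS]Z0.
pose phi := compL (p1L b) io.
pose Jp := fun r : R^o => exists k, phi k = r.
have cJ : closed Jp.
  split; first by exists 0; rewrite linear0.
  by move=> a x y [k1 <-] [k2 <-]; exists (a *: k1 + k2); rewrite linearP.
have hth : forall k, Jp (phi k) by move=> k; exists k.
pose th := coL (P := Jp) (f := phi) hth.
have ths : surjective th.
  move=> y; case: (proj1 (cl_id cJ _) (sub_mem y)) => k hk; exists k.
  by apply: val_inj; rewrite coLE.
have fJ : fgen (subT Jp) by exact: fgen_img ths fK.
have hJ : ResF 1 (subT Jp).
  apply/fin_presP; apply: (coh (iota := valL Jp)); first exact: val_inj.
  exact/fin_genP.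
have fK' : fgen (ker th) by exact: fgen_ker_img ths fK hJ.
pose io' := compL (p2L b) (compL io (valL (kerP th))).
have io'i : injective io'.
  apply: lin_inj0 => x hx; apply: val_inj; rewrite val0; apply: ioi; rewrite linear0.
  apply: p12_0 => //.
  by have := congr1 val (ker_mem x); rewrite coLE.
have := IH _ io' io'i fK'.
move=> h; exact: ResF1_ext (kerL_ses ths) h hJ.
Qed.

Lemma CO m : forall (M : lmod), ResF 1 M -> ResF m M.
Proof.
elim: m => [|m IH] M hM.
  case: hM => P [K [f [g [[_ Pf] [[_ [_ gs]] _]]]]]; exact: fgen_img gs Pf.
case: hM => P [K [f [g [[Pp [b [pi pis]]] [ses fK]]]]].
have [sg hsg] := Pp _ _ pi pis (idL P).
exists P, K, f, g; split; first by split=> //; exists b, pi.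
split=> //; apply: IH.
apply: (@CO1 b K (compL sg f)) => //.
move=> x y /= e; case: ses => fi _; apply: fi.
by have := congr1 pi e; rewrite !hsg.
Qed.
End Coh.

Section Main.
Variable R : pzRingType.
Local Notation lmod := (lmodType R).
Local Notation Fr n := ('rV[R]_n : lmod).

Lemma resG j (M : lmod) : resolution (@fg_projective R) j M <-> ResG j M.
Proof.
split.
  move/(res_to_Res (@fg_projective_iso R)); apply: Res_mono => P /fg_projectiveP //.
move=> h; apply: Res_to_res; move: h; apply: Res_mono => P /fg_projectiveP //.
Qed.
Lemma resP j (M : lmod) : resolution (@projective R) j M <-> ResP j M.
Proof.
split; first exact: (res_to_Res (@proj_iso R)).
exact: Res_to_res.
Qed.

Lemma PltP n (M : lmod) : P_lt_succ n M <->
  exists j, (if n is Some k then (j <= k)%N else True) /\ ResG j M.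
Proof. by split=> -[j [h1 /resG h2]]; exists j. Qed.
Lemma PinfP (M : lmod) : P_lt_inf M <-> exists j, ResG j M.
Proof. by split=> -[j /resG h]; exists j. Qed.
Lemma pdP (M : lmod) k : pd_le M k <-> ResP k M.
Proof.
split; last by move=> h; exists k; split=> //; apply/resP.
move=> [j [jk /resP h]]; apply: (Res_pad_le (@proj_Z R) jk h).
Qed.

Lemma Plt_free n c : P_lt_succ n (Fr c).
Proof. by apply/PltP; exists 0%N; split; [case: n|exact: fgproj_free]. Qed.
Lemma Plt_prod n (M M' : lmod) : P_lt_succ n M -> P_lt_succ n M' -> P_lt_succ n (M * M')%type.
Proof.
move=> /PltP [j [hj rj]] /PltP [j' [hj' rj']]; apply/PltP; exists (maxn j j'); split.
  by case: n hj hj' => // k hj hj'; rewrite geq_max hj hj'.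
apply: Res_prod2; first exact: fgproj_prod.
  by apply: (Res_pad_le (@fgproj_Z R) _ rj); exact: leq_maxl.
by apply: (Res_pad_le (@fgproj_Z R) _ rj'); exact: leq_maxr.
Qed.
Lemma Plt_iso n (M M' : lmod) : isoM M M' -> P_lt_succ n M -> P_lt_succ n M'.
Proof. by move=> h /PltP [j [hj rj]]; apply/PltP; exists j; split=> //; exact: ResG_iso h rj. Qed.
Lemma Plt_fgen n (M : lmod) : P_lt_succ n M -> fgen M.
Proof. by move=> /PltP [j [_ rj]]; exact: (ResG_F rj 0). Qed.

Lemma Hn n (N : lmod) : fgen N -> n_projective n N -> exists X, P_lt_succ n X /\ retr N X.
Proof.
move=> fN nN; apply: H_retr => //.
- exact: Plt_free.
- exact: Plt_prod.
- exact: Plt_iso.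
- exact: Plt_fgen.
Qed.

Lemma nproj_mono n1 n2 (M : lmod) : (forall X : lmod, P_lt_succ n1 X -> P_lt_succ n2 X) ->
  n_projective n1 M -> n_projective n2 M.
Proof.
move=> inc h A B C f g [ses hX]; apply: h; split=> // X /inc; exact: hX.
Qed.

Lemma nproj_of_Plt n (M : lmod) : P_lt_succ n M -> n_projective n M.
Proof. by move=> h A B C f g [_ hX]; exact: hX. Qed.

Lemma gt_succ (m n : natinf) X : gt_inf m n -> P_lt_succ (succinf n) X -> P_lt_succ m (X : lmod).
Proof.
case: n => [k|]; case: m => [b|] //= hb /PltP [j [hj rj]]; apply/PltP; exists j; split=> //.
exact: leq_trans hj hb.
Qed.

Lemma Plt_inf n (X : lmod) : P_lt_succ n X -> P_lt_succ None X.
Proof. by move=> /PltP [j [_ rj]]; apply/PltP; exists j. Qed.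

Lemma a_incl k : lfPD_le R (Some k) -> forall X : lmod, P_lt_succ None X -> P_lt_succ (Some k) X.
Proof.
move=> ha X /PltP [j [_ rj]].
have : pd_le X k by apply: (ha X); apply/PinfP; exists j.
move/pdP => hP; apply/PltP; exists k; split=> //; apply: L1 hP.
exact: ResG_F rj k.
Qed.

Lemma b_to_a k : (forall M : lmod, n_projective (Some k.+1) M -> n_projective (Some k) M) ->
  lfPD_le R (Some k).
Proof.
move=> hb M /PinfP [j rj]; apply/pdP.
elim: j M rj => [|j IH] M rj.
  by apply: (Res_pad_le (@proj_Z R) (leq0n k)); exact: ResG_P rj.
have := rj; move=> [P [K [f [g [CP [ses RK]]]]]].
have hK : ResG k K by apply: L1 (IH _ RK); exact: ResG_F RK k.
have hM : ResG k.+1 M by exists P, K, f, g.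
have nM : n_projective (Some k) M.
  by apply: hb; apply: nproj_of_Plt; apply/PltP; exists k.+1.
have [X [/PltP [jx [hjx rX]] rMX]] := Hn (ResG_F rj 0) nM.
apply: ResP_retr rMX _; apply: (Res_pad_le (@proj_Z R) hjx); exact: ResG_P.
Qed.

Lemma part1 n :
  ((lfPD_le R n <->
      (forall M : lmodType R, n_projective (succinf n) M -> n_projective n M)) /\
   (lfPD_le R n <->
      (exists m : natinf, gt_inf m n /\
         forall M : lmodType R, n_projective m M -> n_projective n M)) /\
   (lfPD_le R n <->
      (forall m : natinf, gt_inf m n ->
         forall M : lmodType R, n_projective m M -> n_projective n M)) /\
   (lfPD_le R n <->
      (forall M : lmodType R, n_projective None M -> n_projective n M))).
Proof.
have ad : lfPD_le R n -> forall m : natinf, gt_inf m n ->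
    forall M : lmodType R, n_projective m M -> n_projective n M.
  case: n => [k|] ha m hm M.
    apply: nproj_mono => X hX; apply: a_incl => //; exact: Plt_inf hX.
  by case: m hm.
have gts : gt_inf (succinf n) n by clear ad; case: n => [k|] //=; rewrite ltnSn.
have cb : (exists m : natinf, gt_inf m n /\
         forall M : lmodType R, n_projective m M -> n_projective n M) ->
    (forall M : lmodType R, n_projective (succinf n) M -> n_projective n M).
  move=> [m [hm h]] M hM; apply: h; apply: nproj_mono hM => X; exact: gt_succ.
have ba : (forall M : lmodType R, n_projective (succinf n) M -> n_projective n M) ->
    lfPD_le R n.
  by case: n ad gts cb => [k|] _ _ _ h; [exact: b_to_a|move=> M _].
have gtn : gt_inf None n by clear ad gts cb ba; case: n.
split; first by split; [move=> ha; apply: ad|].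
split; first by split; [move=> ha; exists (succinf n); split => //; exact: ad|move=> h; apply: ba; exact: cb].
split; first by split; [exact: ad|move=> h; apply: ba => M; exact: h].
split; first by move=> ha; apply: ad.
move=> he; apply: ba => M hM; apply: he; apply: nproj_mono hM => X; exact: Plt_inf.
Qed.

Lemma part2 n :
  ((left_coherent R /\ (forall M : lmodType R, fin_pres M -> pd_lt_succ M n)) <->
   (forall M : lmodType R, pure_projective M -> n_projective n M)).
Proof.
split.
  move=> [coh hpd] M pM A B C f g [ses hX]; apply: pM; split=> // F fF; apply: hX.
  have hF : forall m, ResF m F by move=> m; apply: CO => //; exact/fin_presP.
  have := hpd F fF; case: n hpd => [k|] _ /=.
    move/pdP => hP; apply/PltP; exists k; split=> //; exact: L1.
  by move=> [k /pdP hP]; apply/PltP; exists k; split=> //; exact: L1.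
move=> hb.
have fpn : forall F : lmod, fin_pres F -> n_projective n F.
  by move=> F fF; apply: hb => A B C f g [_ hF]; exact: hF.
have fpr : forall F : lmod, fin_pres F -> exists X, P_lt_succ n X /\ retr F X.
  move=> F fF; apply: Hn (fpn F fF).
  have := proj1 (fin_presP F) fF.
  by move=> [P [K [f [g [[_ Pf] [[_ [_ gs]] _]]]]]]; exact: fgen_img gs Pf.
split.
  move=> I io ioi fI.
  pose S := fun r : R^o => exists x, io x = r.
  have cS : closed S.
    split; first by exists 0; rewrite linear0.
    by move=> a x y [k1 <-] [k2 <-]; exists (a *: k1 + k2); rewrite linearP.
  have ses : short_exact io (piL S).
    split=> //; split; last exact: pi_surj.
    split; first by move=> x; apply/pi_ker; apply: cl_incl; exists x.
    by move=> y /pi_ker /(cl_id cS).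
  have hF : ResF 1 (quotT S).
    exists (R^o : lmod), I, io, (piL S); split; first exact: fgproj_reg.
    by split=> //; exact/fin_genP.
  have [X [/PltP [j [_ rX]] rFX]] := fpr _ (proj2 (fin_presP _) hF).
  have hF2 : ResF 2 (quotT S) by apply: ResF_retr rFX _; exact: ResG_F rX 2.
  by apply/fin_presP; exact: ResF_syz hF2 (@fgproj_reg R) ses.
move=> F fF; have [X [/PltP [j [hj rX]] rFX]] := fpr F fF.
have hP : ResP j F by apply: ResP_retr rFX _; exact: ResG_P.
case: n hb fpn fpr hj => [k|] /= _ _ _ hj; last by exists j; apply/pdP.
by apply/pdP; apply: (Res_pad_le (@proj_Z R) hj hP).
Qed.
End Main.

Local Close Scope ring_scope.

Theorem corollary3p8 (R : pzRingType) (n : natinf) :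
  (* part (1) *)
  ((lfPD_le R n <->
      (forall M : lmodType R, n_projective (succinf n) M -> n_projective n M)) /\
   (lfPD_le R n <->
      (exists m : natinf, gt_inf m n /\
         forall M : lmodType R, n_projective m M -> n_projective n M)) /\
   (lfPD_le R n <->
      (forall m : natinf, gt_inf m n ->
         forall M : lmodType R, n_projective m M -> n_projective n M)) /\
   (lfPD_le R n <->
      (forall M : lmodType R, n_projective None M -> n_projective n M))) /\
  (* part (2) *)
  ((left_coherent R /\ (forall M : lmodType R, fin_pres M -> pd_lt_succ M n)) <->
   (forall M : lmodType R, pure_projective M -> n_projective n M)).
Proof. split; [exact: part1|exact: part2]. Qed.
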